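(* Let $\Theta$ be a well-formed System $\mathsf{F_\wedge}$ context, $S,S'$ types over $\Theta$ and $T,T'$ types over $\Theta, X<:\top$. If $\Theta \vdash S' <: S$ and $\Theta, X <: \top \vdash T <: T'$, then $\Theta \vdash \forall X.\,T[X\wedge S/X^-] <: \forall X.\,T'[X \wedge S'/X^-]$.
   Context: System $\mathsf{F_\wedge}$: raw types $T ::= \top \mid X \mid T \to T \mid \forall X.T \mid T \wedge T$, identified up to $\alpha$-conversion. Contexts are finite sequences of assumptions $X<:T$ or $x:T$ with distinct variables, each type well-formed over the preceding part. Subtyping $\Theta \vdash S <: T$ is generated by: (Var) $\Theta, X<:T,\Theta' \vdash X <: T$; (Top) $T <: \top$; (Refl); (Trans); ($\to$) from $S'<:S$ and $T<:T'$ infer $S\to T <: S' \to T'$; ($\forall$) from $\Theta, X<:\top \vdash S <: T$ infer $\Theta \vdash \forall X.S <: \forall X.T$; (meet) $S\wedge S' <: S$, $S \wedge S' <: S'$, and from $T<:S$, $T<:S'$ infer $T <: S\wedge S'$. Mixed substitution $T[(S_-,S_+)/X]$: $X[(S_-,S_+)/X] = S_+$; $Y[(S_-,S_+)/X] = Y$ for $Y \not\equiv X$; $\top \mapsto \top$; $(T\to T')[(S_-,S_+)/X] = T[(S_+,S_-)/X] \to T'[(S_-,S_+)/X]$; $(\forall Y.T)[(S_-,S_+)/X] = \forall Y.T[(S_-,S_+)/X]$; $(T\wedge T')[(S_-,S_+)/X] = T[(S_-,S_+)/X] \wedge T'[(S_-,S_+)/X]$ (bound variables renamed to avoid capture). $T[U/X^-]$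 abbreviates $T[(U,X)/X]$, i.e. only negative occurrences of $X$ are replaced by $U$. *)

(* Defs.v *)
(* System F_/\ in locally nameless representation:
   bound type variables are de Bruijn indices (so alpha-equivalent types are
   syntactically equal), free variables are named atoms (nat). *)
From Stdlib Require Import List Arith.
Import ListNotations.

Definition atom := nat.

Inductive ty : Type :=
  | TTop  : ty
  | TBVar : nat -> ty
  | TFVar : atom -> ty
  | TArr  : ty -> ty -> ty
  | TAll  : ty -> ty
  | TMeet : ty -> ty -> ty.

Fixpoint open_rec (k : nat) (U : ty) (T : ty) : ty :=
  match T with
  | TTop => TTop
  | TBVar n => if Nat.eqb n k then U else TBVar n
  | TFVar X => TFVar X
  | TArr T1 T2 => TArr (open_rec k U T1) (open_rec k U T2)
  | TAll T1 => TAll (open_rec (S k) U T1)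
  | TMeet T1 T2 => TMeet (open_rec k U T1) (open_rec k U T2)
  end.
Definition open (T U : ty) : ty := open_rec 0 U T.

Fixpoint close_rec (k : nat) (X : atom) (T : ty) : ty :=
  match T with
  | TTop => TTop
  | TBVar n => TBVar n
  | TFVar Y => if Nat.eqb X Y then TBVar k else TFVar Y
  | TArr T1 T2 => TArr (close_rec k X T1) (close_rec k X T2)
  | TAll T1 => TAll (close_rec (S k) X T1)
  | TMeet T1 T2 => TMeet (close_rec k X T1) (close_rec k X T2)
  end.
Definition all_ (X : atom) (T : ty) : ty := TAll (close_rec 0 X T).

Fixpoint fv (T : ty) : list atom :=
  match T with
  | TTop | TBVar _ => []
  | TFVar X => [X]
  | TArr T1 T2 | TMeet T1 T2 => fv T1 ++ fv T2
  | TAll T1 => fv T1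
  end.

Fixpoint lc_at (k : nat) (T : ty) : Prop :=
  match T with
  | TTop | TFVar _ => True
  | TBVar n => n < k
  | TArr T1 T2 | TMeet T1 T2 => lc_at k T1 /\ lc_at k T2
  | TAll T1 => lc_at (S k) T1
  end.

(* Mixed substitution T[(Sm,Sp)/X]: positive occurrences of X get Sp,
   negative ones Sm; polarity flips in the domain of an arrow. *)
Fixpoint msubst (Sm Sp : ty) (X : atom) (T : ty) : ty :=
  match T with
  | TTop => TTop
  | TBVar n => TBVar n
  | TFVar Y => if Nat.eqb X Y then Sp else TFVar Y
  | TArr T1 T2 => TArr (msubst Sp Sm X T1) (msubst Sm Sp X T2)
  | TAll T1 => TAll (msubst Sm Sp X T1)
  | TMeet T1 T2 => TMeet (msubst Sm Sp X T1) (msubst Sm Sp X T2)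
  end.
(* T[U/X^-] := T[(U,X)/X] *)
Definition nsubst (U : ty) (X : atom) (T : ty) : ty := msubst U (TFVar X) X T.

(* Contexts: most recent assumption at the head of the list. *)
Inductive binding : Type :=
  | BSub : ty -> binding
  | BTyp : ty -> binding.
Definition ctx := list (atom * binding).

Definition dom (G : ctx) : list atom := map fst G.

Definition wf_ty (G : ctx) (T : ty) : Prop :=
  lc_at 0 T /\ forall Y, In Y (fv T) -> exists U, In (Y, BSub U) G.

Inductive wf_ctx : ctx -> Prop :=
  | wf_nil : wf_ctx []
  | wf_sub : forall G X T, wf_ctx G -> ~ In X (dom G) -> wf_ty G T ->
      wf_ctx ((X, BSub T) :: G)
  | wf_typ : forall G x T, wf_ctx G -> ~ In x (dom G) -> wf_ty G T ->
      wf_ctx ((x, BTyp T) :: G).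

Inductive sub : ctx -> ty -> ty -> Prop :=
  | sub_var : forall G X T, In (X, BSub T) G -> sub G (TFVar X) T
  | sub_top : forall G T, sub G T TTop
  | sub_refl : forall G T, sub G T T
  | sub_trans : forall G S U T, sub G S U -> sub G U T -> sub G S T
  | sub_arr : forall G S S' T T', sub G S' S -> sub G T T' ->
      sub G (TArr S T) (TArr S' T')
  | sub_all : forall G S T X,
      ~ In X (dom G) -> ~ In X (fv S) -> ~ In X (fv T) ->
      sub ((X, BSub TTop) :: G) (open S (TFVar X)) (open T (TFVar X)) ->
      sub G (TAll S) (TAll T)
  | sub_meet_l : forall G S S', sub G (TMeet S S') S
  | sub_meet_r : forall G S S', sub G (TMeet S S') S'
  | sub_meet_glb : forall G T S S', sub G T S -> sub G T S' ->
      sub G T (TMeet S S').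

(* Main.v *)
Require Import Defs.
From Stdlib Require Import List.
From Stdlib Require Import Arith Lia.
Import ListNotations.

Fixpoint psubst (sm sp : atom -> ty) (T : ty) {struct T} : ty :=
  match T with
  | TTop => TTop
  | TBVar n => TBVar n
  | TFVar Y => sp Y
  | TArr A B => TArr (psubst sp sm A) (psubst sm sp B)
  | TAll A => TAll (psubst sm sp A)
  | TMeet A B => TMeet (psubst sm sp A) (psubst sm sp B)
  end.

Definition upd (f : atom -> ty) (Z : atom) (U : ty) : atom -> ty :=
  fun Y => if Nat.eqb Y Z then U else f Y.
Definition ids : atom -> ty := fun Y => TFVar Y.

Lemma msubst_psubst : forall T A B X,
  msubst A B X T = psubst (upd ids X A) (upd ids X B) T.
Proof.
  induction T; intros; simpl; try congruence.
  unfold upd, ids. rewrite Nat.eqb_sym. reflexivity.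
Qed.

Lemma psubst_ext : forall T sm sp sm2 sp2,
  (forall Y, In Y (fv T) -> sm Y = sm2 Y /\ sp Y = sp2 Y) ->
  psubst sm sp T = psubst sm2 sp2 T.
Proof.
  induction T; intros sm sp sm2 sp2 H; simpl in *; auto.
  - apply H; auto.
  - rewrite (IHT1 sp sm sp2 sm2), (IHT2 sm sp sm2 sp2); auto.
    + intros Y HY; apply H; apply in_or_app; auto.
    + intros Y HY; destruct (H Y); auto; apply in_or_app; auto.
  - f_equal; auto.
  - rewrite (IHT1 sm sp sm2 sp2), (IHT2 sm sp sm2 sp2); auto;
    intros Y HY; apply H; apply in_or_app; auto.
Qed.

Lemma psubst_id : forall T, psubst ids ids T = T.
Proof. induction T; simpl; f_equal; auto. Qed.

Lemma lc_mono : forall T k j, lc_at k T -> k <= j -> lc_at j T.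
Proof.
  induction T; simpl; intros; intuition (eauto with arith; try lia).
  all: apply (IHT (S k)); auto; lia.
Qed.

Lemma open_lc : forall T k U, lc_at k T -> forall j, k <= j -> open_rec j U T = T.
Proof.
  induction T; simpl; intros k U H j Hj; intuition.
  - destruct (Nat.eqb_spec n j); auto; lia.
  - rewrite (IHT1 k U H0 j), (IHT2 k U H1 j); auto.
  - rewrite (IHT (S k) U H (S j)); auto; lia.
  - rewrite (IHT1 k U H0 j), (IHT2 k U H1 j); auto.
Qed.

Definition LC (sm sp : atom -> ty) := forall Y, lc_at 0 (sm Y) /\ lc_at 0 (sp Y).

Lemma psubst_open : forall S k U sm sp, LC sm sp ->
  psubst sm sp U = psubst sp sm U ->
  psubst sm sp (open_rec k U S) = open_rec k (psubst sm sp U) (psubst sm sp S).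
Proof.
  induction S; intros k U sm sp Hl He; simpl; auto.
  - destruct (Nat.eqb n k); auto.
  - rewrite (open_lc _ 0); auto; [apply Hl | lia].
  - rewrite IHS1, IHS2; auto.
    + rewrite He; auto.
    + intro Y; destruct (Hl Y); auto.
  - rewrite IHS; auto.
  - rewrite IHS1, IHS2; auto.
Qed.

Lemma lc_psubst : forall T k sm sp, LC sm sp -> lc_at k T -> lc_at k (psubst sm sp T).
Proof.
  induction T; simpl; intros k sm sp Hl H; intuition.
  - apply (lc_mono _ 0); [apply Hl | lia].
  - apply IHT1; auto. intro Y; destruct (Hl Y); auto.
Qed.

Lemma fv_close : forall U k X, ~ In X (fv (close_rec k X U)).
Proof.
  induction U; simpl; intros k X H; auto.
  - destruct (Nat.eqb_spec X a); simpl in H; auto. intuition.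
  - apply in_app_or in H; firstorder.
  - firstorder.
  - apply in_app_or in H; firstorder.
Qed.

Lemma open_close : forall U k X, lc_at k U -> open_rec k (TFVar X) (close_rec k X U) = U.
Proof.
  induction U; simpl; intros k X H; intuition.
  - destruct (Nat.eqb_spec n k); auto; lia.
  - destruct (Nat.eqb_spec X a); simpl; subst; auto.
    rewrite Nat.eqb_refl; auto.
  - rewrite IHU1, IHU2; auto.
  - rewrite IHU; auto.
  - rewrite IHU1, IHU2; auto.
Qed.

Definition fresh (l : list atom) : atom := S (list_max l).
Lemma fresh_notin : forall l, ~ In (fresh l) l.
Proof.
  intros l H. unfold fresh in H.
  assert (Hf : Forall (fun k => k <= list_max l) l) by (apply list_max_le; lia).
  rewrite Forall_forall in Hf. apply Hf in H. lia.
Qed.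

Definition Inv (G : ctx) := forall Y V, In (Y, BSub V) G -> forall W, In W (fv V) -> In W (dom G).
Definition Cond (G G' : ctx) (sm sp : atom -> ty) :=
  forall Y V, In (Y, BSub V) G -> V = TTop \/
    (sm Y = TFVar Y /\ sp Y = TFVar Y /\ In (Y, BSub V) G' /\
     forall W, In W (fv V) -> sm W = TFVar W /\ sp W = TFVar W).

Lemma in_dom : forall G Y b, In (Y, b) G -> In Y (dom G).
Proof. intros. unfold dom. change Y with (fst (Y, b)). apply in_map; auto. Qed.

Lemma size_fresh3 : forall l1 l2 l3 W, W = fresh (l1 ++ l2 ++ l3) ->
  ~ In W l1 /\ ~ In W l2 /\ ~ In W l3.
Proof.
  intros; subst. pose proof (fresh_notin (l1 ++ l2 ++ l3)).
  repeat split; intro; apply H; repeat (apply in_or_app; auto; right).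
Qed.

Lemma L : forall G T U, sub G T U -> forall G' sm sp, Inv G -> LC sm sp ->
  Cond G G' sm sp -> sub G' (psubst sm sp T) (psubst sm sp U).
Proof.
  induction 1; intros G' sm sp Hi Hl Hc; simpl.
  - destruct (Hc X T H) as [-> | [Hm [Hp [Hin Hw]]]].
    + apply sub_top.
    + rewrite Hp. rewrite (psubst_ext T sm sp ids ids), psubst_id; auto.
      apply sub_var; auto.
  - apply sub_top.
  - apply sub_refl.
  - eapply sub_trans; eauto.
  - apply sub_arr.
    + apply IHsub1; auto.
      * intro Y; destruct (Hl Y); auto.
      * intros Y V HY; destruct (Hc Y V HY) as [|[? [? [? Hw]]]]; auto.
        right; repeat split; auto; apply Hw; auto.
    + apply IHsub2; auto.
  - remember (fresh (dom G' ++ fv (psubst sm sp S) ++ fv (psubst sm sp T))) as W.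
    destruct (size_fresh3 _ _ _ _ HeqW) as [HW1 [HW2 HW3]].
    apply (sub_all _ _ _ W); auto.
    set (sm' := upd sm X (TFVar W)). set (sp' := upd sp X (TFVar W)).
    assert (Hl' : LC sm' sp').
    { intro Y; unfold sm', sp', upd; destruct (Nat.eqb Y X); simpl; auto. }
    assert (Hz : psubst sm' sp' (TFVar X) = TFVar W).
    { simpl; unfold sp', upd; rewrite Nat.eqb_refl; auto. }
    assert (Hz' : psubst sp' sm' (TFVar X) = TFVar W).
    { simpl; unfold sm', upd; rewrite Nat.eqb_refl; auto. }
    assert (HS : psubst sm' sp' S = psubst sm sp S).
    { apply psubst_ext. intros Y HY; unfold sm', sp', upd.
      destruct (Nat.eqb_spec Y X); subst; [contradiction|auto]. }
    assert (HT : psubst sm' sp' T = psubst sm sp T).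
    { apply psubst_ext. intros Y HY; unfold sm', sp', upd.
      destruct (Nat.eqb_spec Y X); subst; [contradiction|auto]. }
    rewrite <- Hz, <- HS, <- HT. unfold open.
    rewrite <- !psubst_open; auto; try congruence.
    apply IHsub; auto.
    + intros Y V HY W' HW'. destruct HY as [HY|HY].
      * inversion HY; subst; simpl in HW'; contradiction.
      * right; eapply Hi; eauto.
    + intros Y V HY. destruct HY as [HY|HY].
      * inversion HY; subst; auto.
      * destruct (Hc Y V HY) as [|[Hm [Hp [Hin Hw]]]]; auto. right.
        assert (HYX : Y <> X) by (intro; subst; apply H; eapply in_dom; eauto).
        unfold sm', sp', upd.
        destruct (Nat.eqb_spec Y X); [contradiction|].
        split; [auto|]. split; [auto|]. split; [right; auto|].
        intros W' HW'. assert (W' <> X) by (intro; subst; apply H; eapply Hi; eauto).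
        destruct (Nat.eqb_spec W' X); [contradiction|]. apply Hw; auto.
  - apply sub_meet_l.
  - apply sub_meet_r.
  - apply sub_meet_glb; auto.
Qed.

Lemma weaken : forall G S T W, Inv G -> sub G S T -> sub ((W, BSub TTop) :: G) S T.
Proof.
  intros. rewrite <- (psubst_id S), <- (psubst_id T).
  apply (L G); auto.
  - intro; simpl; auto.
  - intros Y V HY. right. repeat split; auto. right; auto.
Qed.

Fixpoint size (T : ty) : nat :=
  match T with
  | TTop | TBVar _ | TFVar _ => 1
  | TArr a b | TMeet a b => S (size a + size b)
  | TAll a => S (size a)
  end.

Lemma size_open : forall T k W, size (open_rec k (TFVar W) T) = size T.
Proof.
  induction T; simpl; intros; auto.
  destruct (Nat.eqb n k); auto.
Qed.

Lemma Inv_ext : forall G W, Inv G -> Inv ((W, BSub TTop) :: G).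
Proof.
  intros G W Hi Y V HY W' HW'. destruct HY as [HY|HY].
  - inversion HY; subst; simpl in HW'; contradiction.
  - right; eapply Hi; eauto.
Qed.

Lemma M : forall n T, size T <= n -> forall G sm sp sm' sp', Inv G -> LC sm sp -> LC sm' sp' ->
  (forall Y, sub G (sp Y) (sp' Y) /\ sub G (sm' Y) (sm Y)) ->
  sub G (psubst sm sp T) (psubst sm' sp' T).
Proof.
  induction n; intros T Hs G sm sp sm' sp' Hi Hl Hl' H.
  - destruct T; simpl in Hs; lia.
  - destruct T; simpl in *.
    + apply sub_refl.
    + apply sub_refl.
    + apply H.
    + apply sub_arr.
      * apply IHn; try lia; auto.
        -- intro Y; destruct (Hl' Y); auto.
        -- intro Y; destruct (Hl Y); auto.
        -- intro Y; destruct (H Y); auto.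
      * apply IHn; try lia; auto.
    + remember (fresh (dom G ++ fv T ++ fv (psubst sm sp T) ++ fv (psubst sm' sp' T))) as W.
      assert (HW := fresh_notin (dom G ++ fv T ++ fv (psubst sm sp T) ++ fv (psubst sm' sp' T))).
      rewrite <- HeqW in HW.
      assert (~ In W (dom G) /\ ~ In W (fv T) /\ ~ In W (fv (psubst sm sp T)) /\
              ~ In W (fv (psubst sm' sp' T))) as [H1 [H2 [H3 H4]]].
      { repeat split; intro; apply HW; repeat (apply in_or_app; auto; right). }
      apply (sub_all _ _ _ W); auto.
      assert (E : forall a b, LC a b -> psubst a b T = psubst (upd a W (TFVar W)) (upd b W (TFVar W)) T).
      { intros a b _. apply psubst_ext. intros Y HY; unfold upd.
        destruct (Nat.eqb_spec Y W); subst; [contradiction|auto]. }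
      assert (LU : forall a b, LC a b -> LC (upd a W (TFVar W)) (upd b W (TFVar W))).
      { intros a b Hab Y; unfold upd; destruct (Nat.eqb Y W); simpl; auto. }
      assert (Ez : forall a b, psubst (upd a W (TFVar W)) (upd b W (TFVar W)) (TFVar W) = TFVar W).
      { intros; simpl; unfold upd; rewrite Nat.eqb_refl; auto. }
      assert (Eo : forall a b, LC a b -> open (psubst a b T) (TFVar W) =
        psubst (upd a W (TFVar W)) (upd b W (TFVar W)) (open T (TFVar W))).
      { intros a b Hab. unfold open. rewrite psubst_open; auto.
        - rewrite Ez, <- E; auto.
        - simpl; unfold upd; rewrite Nat.eqb_refl; auto. }
      rewrite !Eo; auto.
      apply IHn; auto.
      * unfold open; rewrite size_open; lia.
      * apply Inv_ext; auto.
      * intro Y; unfold upd; destruct (Nat.eqb Y W).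
        -- split; apply sub_refl.
        -- destruct (H Y); split; apply weaken; auto.
    + apply sub_meet_glb.
      * eapply sub_trans; [apply sub_meet_l|]. apply IHn; auto; lia.
      * eapply sub_trans; [apply sub_meet_r|]. apply IHn; auto; lia.
Qed.

Lemma wf_bounds : forall G, wf_ctx G -> Inv G.
Proof.
  induction 1; intros Y V HY W HW.
  - destruct HY.
  - destruct HY as [HY|HY].
    + inversion HY; subst. destruct H1 as [_ Hf]. destruct (Hf W HW) as [U HU].
      right; eapply in_dom; eauto.
    + right; eapply IHwf_ctx; eauto.
  - destruct HY as [HY|HY].
    + inversion HY.
    + right; eapply IHwf_ctx; eauto.
Qed.

Theorem lemma3p7 (Th : ctx) (X : atom) (S S' T T' : ty) :
  wf_ctx Th -> ~ In X (dom Th) ->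
  wf_ty Th S -> wf_ty Th S' ->
  wf_ty ((X, BSub TTop) :: Th) T -> wf_ty ((X, BSub TTop) :: Th) T' ->
  sub Th S' S ->
  sub ((X, BSub TTop) :: Th) T T' ->
  sub Th (all_ X (nsubst (TMeet (TFVar X) S) X T))
         (all_ X (nsubst (TMeet (TFVar X) S') X T')).
Proof.
  intros Hw HX [HlS _] [HlS' _] [HlT _] [HlT' _] HSS HTT.
  assert (Hi : Inv Th) by (apply wf_bounds; auto).
  assert (Hi' : Inv ((X, BSub TTop) :: Th)) by (apply Inv_ext; auto).
  assert (LCu : forall A, lc_at 0 A -> LC (upd ids X A) (upd ids X (TFVar X))).
  { intros A HA Y; unfold upd, ids; destruct (Nat.eqb Y X); simpl; auto. }
  assert (HA : lc_at 0 (TMeet (TFVar X) S)) by (simpl; auto).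
  assert (HA' : lc_at 0 (TMeet (TFVar X) S')) by (simpl; auto).
  unfold all_, nsubst. rewrite !msubst_psubst.
  apply (sub_all _ _ _ X); auto using fv_close.
  unfold open. rewrite !open_close by (apply lc_psubst; auto).
  eapply sub_trans.
  - apply (L _ _ _ HTT); auto.
    intros Y V HY. destruct HY as [HY|HY].
    + inversion HY; auto.
    + right.
      assert (HYX : Y <> X) by (intro; subst; apply HX; eapply in_dom; eauto).
      unfold upd, ids. destruct (Nat.eqb_spec Y X); [contradiction|].
      split; [auto|]. split; [auto|]. split; [right; auto|].
      intros W' HW'. assert (W' <> X) by (intro; subst; apply HX; eapply Hi; eauto).
      destruct (Nat.eqb_spec W' X); [contradiction|]. auto.
  - apply (M (size T')); auto.
    intro Y; unfold upd, ids; destruct (Nat.eqb Y X).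
    + split; [apply sub_refl|].
      apply sub_meet_glb; [apply sub_meet_l|].
      eapply sub_trans; [apply sub_meet_r|]. apply weaken; auto.
    + split; apply sub_refl.
Qed.
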